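(* For every positive integer $n$, $$\sum_{\mathbf a\in\mathsf{PF}_n} t^{z(\mathbf a)}=\sum_{\mathbf a\in\mathsf{PF}_n} t^{\operatorname{run}(\mathbf a)}.$$
   Context: Let $[n]=\{1,\dots,n\}$. $\mathsf{PF}_n$ is the set of $\mathbf a=(a_1,\dots,a_n)\in[n]^n$ with $|\{j:a_j\le i\}|\ge i$ for every $i\in[n]$ (parking functions). For $\mathbf a\in[n]^n$, the center $Z(\mathbf a)$ is the largest subset $X=\{x_1<\dots<x_\ell\}\subseteq[n]$ with $a_{x_i}\le i$ for all $i\in[\ell]$, and $z(\mathbf a)=|Z(\mathbf a)|$. If $1\in\{a_1,\dots,a_n\}$, $\operatorname{run}(\mathbf a)=\max\{i\in[n]:[i]\subseteq\{a_1,\dots,a_n\}\}$; otherwise $\operatorname{run}(\mathbf a)=0$. *)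

(* Defs.v *)
From mathcomp Require Import all_boot all_order all_algebra.
Set Implicit Arguments. Unset Strict Implicit. Unset Printing Implicit Defensive.

(* Convention: an element a of [n]^n is a finite function 'I_n -> 'I_n;
   position j : 'I_n stands for j+1 and value a j stands for (a j)+1. *)

Definition is_pf (n : nat) (a : {ffun 'I_n -> 'I_n}) : bool :=
  [forall i : 'I_n, i.+1 <= #|[set j | (a j <= i)%N]|].

(* X = {x_1 < ... < x_l} satisfies a_{x_i} <= i for all i,
   i.e. each x in X has value at most its rank in X *)
Definition center_ok (n : nat) (a : {ffun 'I_n -> 'I_n}) (X : {set 'I_n}) : bool :=
  [forall x in X, (a x).+1 <= #|[set y in X | (y <= x)%N]|].

Definition zstat (n : nat) (a : {ffun 'I_n -> 'I_n}) : nat :=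
  \max_(X : {set 'I_n} | center_ok a X) #|X|.

Definition runstat (n : nat) (a : {ffun 'I_n -> 'I_n}) : nat :=
  \max_(i < n.+1 | [forall k : 'I_n, (k < i)%N ==> [exists j, a j == k]]) i.

(* Main.v *)
Require Import Defs.
From mathcomp Require Import all_boot all_order all_algebra.
From mathcomp Require Import zify.
Set Implicit Arguments. Unset Strict Implicit. Unset Printing Implicit Defensive.


Fixpoint Pl (k : nat) (r : seq nat) : bool :=
  match r with
  | [::] => k == 0
  | a :: r' => match k with 0 => true | k'.+1 => if a < k then Pl k' r' else Pl k r' end
  end.
Definition Pw k w := Pl k (rev w).
Definition Qw k (w : seq nat) := all (fun v => v \in w) (iota 0 k).

Lemma Pl0 r : Pl 0 r. Proof. by case: r. Qed.

Lemma Pw_rcons k w a : Pw k (rcons w a) =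
  if k is k'.+1 then (if a < k then Pw k' w else Pw k w) else true.
Proof. by rewrite /Pw rev_rcons /=; case: k. Qed.

Definition sw (a b x : nat) := if x == a then b else if x == b then a else x.
Lemma swK a b : involutive (sw a b).
Proof.
move=> x; rewrite /sw; have [->|xa] := eqVneq x a.
  by rewrite eqxx; have [->|ba] := eqVneq b a; rewrite ?eqxx.
have [->|xb] := eqVneq x b; first by rewrite eqxx.
by rewrite (negPf xa) (negPf xb).
Qed.

Lemma QwP k w : reflect (forall v, v < k -> v \in w) (Qw k w).
Proof.
apply: (iffP allP) => H v; first by move=> vk; apply: H; rewrite mem_iota.
by rewrite mem_iota => /andP [_]; apply: H.
Qed.

Lemma Qw_rcons_ge k w a : k <= a -> Qw k (rcons w a) = Qw k w.
Proof.
move=> ka; apply/QwP/QwP => H v vk.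
  have va : v != a by apply/eqP; lia.
  by have := H v vk; rewrite mem_rcons in_cons (negPf va).
by rewrite mem_rcons in_cons H ?orbT.
Qed.

Lemma mem_map_sw a b v w : (v \in map (sw a b) w) = (sw a b v \in w).
Proof.
by rewrite -{1}(swK a b v) (mem_map (can_inj (swK a b))).
Qed.

Lemma Qw_rcons_lt k w a : a < k.+1 -> Qw k.+1 (rcons w a) = Qw k (map (sw a k) w).
Proof.
move=> ak; apply/QwP/QwP => H v vk.
- rewrite mem_map_sw /sw.
  case: (eqVneq v a) => [va|va].
    have := H k (ltnSn k); rewrite mem_rcons in_cons; case: eqP => //; lia.
  have -> : (v == k) = false by apply/eqP; lia.
  by have := H v (ltnW vk); rewrite mem_rcons in_cons (negPf va).
- rewrite mem_rcons in_cons; case: (eqVneq v a) => //= va.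
  case: (eqVneq v k) => [vk'|vk'].
    have ak' : a < k by lia.
    by have := H a ak'; rewrite mem_map_sw /sw eqxx vk'.
  have vk2 : v < k by lia.
  by have := H v vk2; rewrite mem_map_sw /sw (negPf va) (negPf vk').
Qed.

Definition cle s := fun x : nat => x <= s.
Definition keq (w u : seq nat) :=
  forall s, minn (count (cle s) w) s.+1 = minn (count (cle s) u) s.+1.
Definition resp (F : seq nat -> nat) := forall w u, keq w u -> F w = F u.

Lemma count_rc (p : pred nat) w a : count p (rcons w a) = count p w + p a.
Proof. by rewrite -cats1 count_cat /= addn0. Qed.

Lemma keq_rcons w u a : keq w u -> keq (rcons w a) (rcons u a).
Proof. move=> H s; rewrite !count_rc; have := H s; case: (cle s a) => /=; lia. Qed.

Lemma resp_rcons F a : resp F -> resp (fun w => F (rcons w a)).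
Proof. by move=> HF w u /(keq_rcons a) /HF. Qed.

Lemma Qw_count k w s : Qw k w -> s < k -> s.+1 <= count (cle s) w.
Proof.
move=> /QwP H sk; rewrite -size_filter -(size_iota 0 s.+1).
apply: uniq_leq_size; first exact: iota_uniq.
move=> v; rewrite mem_iota mem_filter /cle => /andP [_ vs].
have -> : v <= s by lia.
by rewrite /=; apply: H; lia.
Qed.

Lemma keq_K2 k w a : Qw k w -> a < k.+1 -> keq (rcons w a) (rcons w k).
Proof.
move=> Q ak s; rewrite !count_rc.
case: (ltnP s k) => sk.
  have := Qw_count Q sk; rewrite /cle; case: (a <= s); case: (k <= s) => /=; lia.
by rewrite /cle (leq_trans _ sk) ?sk //; lia.
Qed.

Lemma Qw_map_sw k w a : Qw k w -> a < k -> k.-1 < k -> Qw k (map (sw a k.-1) w).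
Proof.
move=> /QwP H ak _; apply/QwP => v vk; rewrite mem_map_sw; apply: H.
rewrite /sw; case: eqP => _; first lia. case: eqP => _; lia.
Qed.

Lemma keq_K3 k w a : Qw k w -> a < k -> keq (map (sw a k.-1) w) w.
Proof.
move=> Q ak s.
case: (ltnP s k.-1) => sk.
  have h1 := Qw_count Q (leq_trans sk (leq_pred k)).
  have kk : k.-1 < k by lia.
  have h2 := Qw_count (Qw_map_sw Q ak kk) (leq_trans sk (leq_pred k)).
  lia.
rewrite count_map; congr minn; apply: eq_count => x; rewrite /= /cle /sw.
case: eqP => [->|_]; first lia. case: eqP => [->|_] //; lia.
Qed.

Fixpoint S (m L : nat) (F : seq nat -> nat) : nat :=
  if L is L'.+1 then \sum_(a < m) S m L' (fun w => F ((a : nat) :: w)) else F [::].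

Lemma S_ext m L F G : (forall w, F w = G w) -> S m L F = S m L G.
Proof.
elim: L F G => [|L IH] F G H /=; first exact: H.
by apply: eq_bigr => a _; apply: IH => w.
Qed.

Lemma S_rcons m L F : S m L.+1 F = \sum_(a < m) S m L (fun w => F (rcons w (a : nat))).
Proof.
elim: L F => [|L IH] F; first by [].
have -> : S m L.+2 F = \sum_(b < m) S m L.+1 (fun w => F ((b : nat) :: w)) by [].
rewrite (eq_bigr (fun b : 'I_m => \sum_(a < m) S m L (fun w => F ((b : nat) :: rcons w (a : nat))))); last first.
  by move=> b _; rewrite IH.
by rewrite exchange_big.
Qed.

Lemma sum_inv m (s : nat -> nat) (h : nat -> nat) :
  involutive s -> (forall x, x < m -> s x < m) ->
  \sum_(a < m) h (s a) = \sum_(a < m) h a.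
Proof.
move=> sK sm.
pose so := fun i : 'I_m => Ordinal (sm i (ltn_ord i)).
have soi : injective so.
  by move=> i j /(congr1 val) /= /(congr1 s); rewrite !sK => /val_inj.
by rewrite [RHS](reindex_inj soi).
Qed.

Lemma S_map m L F s : involutive s -> (forall x, x < m -> s x < m) ->
  S m L (fun w => F (map s w)) = S m L F.
Proof.
move=> sK sm; elim: L F => [|L IH] F //=.
rewrite (eq_bigr (fun a : 'I_m => S m L (fun w => F (s a :: w)))); last first.
  by move=> a _; exact: (IH (fun w => F (s a :: w))).
exact: (sum_inv (fun a : nat => S m L (fun w => F (a :: w))) sK sm).
Qed.

Lemma core m L : forall k F, k <= m -> resp F ->
  S m L (fun w => Pw k w * F w) = S m L (fun w => Qw k w * F w).
Proof.
elim: L => [|L IH] k F km HF.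
  by rewrite /= /Pw /Qw /=; case: k km.
rewrite !S_rcons; apply: eq_bigr => a _.
case: k km => [|k] km.
  by apply: S_ext => w; rewrite Pw_rcons /Qw.
case: (ltnP a k.+1) => ak.
- rewrite (@S_ext _ _ _ (fun w => Pw k w * F (rcons w a))); last first.
    by move=> w; rewrite Pw_rcons ak.
  rewrite IH; [| lia | exact: resp_rcons].
  rewrite (@S_ext _ _ (fun w => Qw k.+1 (rcons w a) * F (rcons w a))
     (fun w => Qw k (map (sw a k) w) * F (rcons w a))); last first.
    by move=> w; rewrite Qw_rcons_lt.
  rewrite -(@S_map m L _ (sw a k) (swK a k)); last first.
    move=> x xm; rewrite /sw; case: eqP => _; first lia; case: eqP => _; lia.
  apply: S_ext => w /=.
  have -> : rcons w a = rcons (map (sw a k) (map (sw a k) w)) a by rewrite (mapK (swK a k)).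
  move: (map (sw a k) w) => u.
  case Qk: (Qw k u); rewrite ?mul0n ?mul1n //.
  have Q1 : Qw k.+1 (rcons u k).
    apply/QwP => v vk; rewrite mem_rcons in_cons; case: eqP => //= vk'.
    by move/QwP: Qk; apply; lia.
  have -> : rcons (map (sw a k) u) a = map (sw a k) (rcons u k).
    by rewrite map_rcons /sw eqxx; case: eqP => [->|]; rewrite ?eqxx.
  rewrite (HF _ _ (keq_K3 Q1 ak)).
  exact: HF (keq_K2 Qk ak).
- rewrite (@S_ext _ _ _ (fun w => Pw k.+1 w * F (rcons w a))); last first.
    by move=> w; rewrite Pw_rcons ltnNge ak.
  rewrite IH //; last exact: resp_rcons.
  by apply: S_ext => w; rewrite Qw_rcons_ge.
Qed.


Definition rank (m : seq bool) i := \sum_(j < i) nth false m j.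
Definition ranked (m : seq bool) (w : seq nat) :=
  all (fun i => nth false m i ==> (nth 0 w i < rank m i.+1)) (iota 0 (size w)).

Lemma rank_rcons m b i : i <= size m -> rank (rcons m b) i = rank m i.
Proof.
move=> im; apply: eq_bigr => j _; rewrite nth_rcons.
by have -> : j < size m by apply: leq_trans (ltn_ord j) im.
Qed.

Lemma rank_rcons_last m b : rank (rcons m b) (size m).+1 = rank m (size m) + b.
Proof.
rewrite /rank big_ord_recr /= nth_rcons ltnn eqxx; congr (_ + _).
by apply: eq_bigr => j _; rewrite nth_rcons ltn_ord.
Qed.

Lemma ranked_rcons m w b a : size m = size w ->
  ranked (rcons m b) (rcons w a) = ranked m w && (b ==> (a < (rank m (size m)).+1)).
Proof.
move=> smw; rewrite /ranked size_rcons -addn1 iotaD all_cat /= andbT add0n.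
congr andb.
  apply: eq_in_all => i; rewrite mem_iota add0n => /andP [_ iw].
  by rewrite !nth_rcons smw iw rank_rcons // smw.
rewrite !nth_rcons ltnn eqxx -smw ltnn eqxx rank_rcons_last; case: b => //=; by rewrite addn1.
Qed.

Lemma Pl_mono r k : Pl k.+1 r -> Pl k r.
Proof.
elim: r k => [|a r IH] k //=.
case: k => [|k] //=.
case: (ltnP a k.+1) => ak.
  by rewrite (ltn_trans ak (ltnSn _)) => /IH.
case: (ltnP a k.+2) => ak2.
  by [].
exact: IH.
Qed.

Lemma Pw_mono w k : Pw k.+1 w -> Pw k w.
Proof. exact: Pl_mono. Qed.

Lemma rank_nseq i n : rank (nseq n false) i = 0.
Proof. by apply: big1 => j _; rewrite nth_nseq; case: ifP. Qed.

Lemma ranked_false n w : ranked (nseq n false) w.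
Proof. by apply/allP => i _; rewrite nth_nseq; case: ifP. Qed.

Lemma Pw_char k w : Pw k w <->
  exists m, [/\ size m = size w, k <= rank m (size m) & ranked m w].
Proof.
elim/last_ind: w k => [|w a IH] k.
  rewrite /Pw /=; split.
    by move/eqP ->; exists [::]; split.
  by case=> m [/size0nil -> h _]; move: h; rewrite /rank big_ord0; case: k.
rewrite Pw_rcons; split.
- case: k => [_|k].
    by exists (nseq (size (rcons w a)) false); rewrite size_nseq rank_nseq ranked_false.
  case: (ltnP a k.+1) => ak.
    case/IH=> m [sm km rm]; exists (rcons m true).
    rewrite !size_rcons rank_rcons_last ranked_rcons // rm /=; split => //; lia.
  case/IH=> m [sm km rm]; exists (rcons m false).
  rewrite !size_rcons rank_rcons_last ranked_rcons // rm /=; split => //; lia.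
- case=> M []; case/lastP: M => [|m b]; first by rewrite size_rcons.
  rewrite !size_rcons => /eqP; rewrite eqSS => /eqP sm.
  rewrite rank_rcons_last ranked_rcons // => kb /andP [rm ab].
  case: k kb => [|k] kb //.
  have HP : forall j, j <= rank m (size m) -> Pw j w.
    by move=> j jr; apply/IH; exists m; split.
  case: b kb ab => /= kb ab.
    case: (ltnP (rank m (size m)) k.+1) => rk.
      have -> : a < k.+1 by lia.
      by apply: HP; lia.
    have := HP k.+1 rk; case: ifP => _ //; exact: Pw_mono.
  rewrite addn0 in kb.
  have := HP k.+1 kb; case: ifP => _ //; exact: Pw_mono.
Qed.


Definition word n m (a : {ffun 'I_n -> 'I_m}) : seq nat := [seq val (a j) | j <- enum 'I_n].

Lemma sum_tuple m n (G : seq nat -> nat) :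
  \sum_(t : n.-tuple 'I_m) G (map val t) = S m n G.
Proof.
elim: n G => [|n IH] G.
  rewrite (big_pred1 [tuple]) /=; last by move=> t; rewrite /= [t]tuple0; apply/esym/eqP.
  by [].
pose h := fun p : 'I_m * n.-tuple 'I_m => [tuple of p.1 :: p.2].
have hb : bijective h.
  exists (fun t : n.+1.-tuple 'I_m => (thead t, [tuple of behead t])).
    by case=> x t; congr pair; apply: val_inj.
  by move=> t; apply: val_inj => /=; case: t => [[|x s]].
rewrite (reindex h); last by apply: onW_bij.
transitivity (\sum_(x : 'I_m) \sum_(t : n.-tuple 'I_m) G ((x:nat) :: map val t)).
  by rewrite pair_big /=; apply: eq_bigr => p _.
apply: eq_bigr => x _.
exact: (IH (fun w => G ((x : nat) :: w))).
Qed.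

Lemma sum_ffun m n (G : seq nat -> nat) :
  \sum_(a : {ffun 'I_n -> 'I_m}) G (word a) = S m n G.
Proof.
rewrite -sum_tuple.
pose h := fun t : n.-tuple 'I_m => [ffun i => tnth t i].
have hb : bijective h.
  exists (fun a : {ffun 'I_n -> 'I_m} => [tuple a i | i < n]).
    by move=> t; apply: eq_from_tnth => i; rewrite tnth_mktuple ffunE.
  by move=> a; apply/ffunP => i; rewrite ffunE tnth_mktuple.
rewrite (reindex h); last by apply: onW_bij.
apply: eq_bigr => t _; congr G.
rewrite /word /h.
transitivity [seq val (tnth t i) | i <- enum 'I_n].
  by apply: eq_map => i; rewrite ffunE.
by rewrite -[X in _ = map _ X](map_tnth_enum t) ; elim: (enum _) => //= x s ->.
Qed.


Lemma cnt_card n (p : pred 'I_n) : count p (enum 'I_n) = #|[set j | p j]|.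
Proof. rewrite cardsE cardE /enum_mem size_filter count_filter. by apply: eq_count => x; rewrite /= !inE andbT. Qed.

Section F.
Variable n : nat.
Implicit Types a : {ffun 'I_n -> 'I_n}.

Definition mX (X : {set 'I_n}) : seq bool := [seq j \in X | j <- enum 'I_n].

Lemma size_word a : size (word a) = n.
Proof. by rewrite /word size_map size_enum_ord. Qed.

Lemma size_mX X : size (mX X) = n.
Proof. by rewrite /mX size_map size_enum_ord. Qed.

Lemma nth_word a (j : 'I_n) : nth 0 (word a) j = a j.
Proof. by rewrite /word (nth_map j) ?size_enum_ord // nth_ord_enum. Qed.

Lemma nth_mX X (j : 'I_n) : nth false (mX X) j = (j \in X).
Proof. by rewrite /mX (nth_map j) ?size_enum_ord // nth_ord_enum. Qed.

Lemma all_iota_ord (P : pred nat) : all P (iota 0 n) = [forall j : 'I_n, P j].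
Proof.
apply/allP/forallP => H.
  by move=> j; apply: H; rewrite mem_iota /= ltn_ord.
by move=> i; rewrite mem_iota /= => lin; exact: (H (Ordinal lin)).
Qed.

Lemma rank_mX X i : i <= n -> rank (mX X) i = #|[set y in X | y < i]|.
Proof.
move=> iN; rewrite /rank (big_ord_widen _ (fun j => nat_of_bool (nth false (mX X) j)) iN).
rewrite -sum1dep_card big_mkcond [RHS]big_mkcond /=.
apply: eq_bigr => j _; rewrite nth_mX.
by case: (j \in X); case: (j < i).
Qed.

Lemma ranked_center a X : ranked (mX X) (word a) = center_ok a X.
Proof.
rewrite /ranked size_word all_iota_ord /center_ok.
apply/forallP/forallP => H j; have := H j; rewrite nth_mX nth_word rank_mX //.
Qed.

Lemma zstat_ge a k : (k <= zstat a) = [exists X, center_ok a X && (k <= #|X|)].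
Proof.
apply/idP/idP.
  case: k => [_|k].
    apply/existsP; exists set0; rewrite leq0n andbT; apply/forallP => x; by rewrite in_set0.
  apply: contraLR => HN; rewrite -ltnNge ltnS; apply/bigmax_leqP => X cX; rewrite leqNgt; apply/negP => kX.
  move/negP: HN; apply; apply/existsP; exists X; by rewrite cX.
case/existsP => X /andP [cX kX]; apply: leq_trans kX _; exact: leq_bigmax_cond.
Qed.

Lemma Pw_zstat a k : Pw k (word a) = (k <= zstat a).
Proof.
rewrite zstat_ge; apply/idP/existsP.
  case/Pw_char => m [sm km rm].
  rewrite size_word in sm.
  exists [set j : 'I_n | nth false m j].
  have mE : mX [set j : 'I_n | nth false m j] = m.
    apply: (@eq_from_nth _ false); rewrite size_mX // => i iN.
    by rewrite (nth_mX _ (Ordinal iN)) inE.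
  rewrite -ranked_center mE rm /=.
  by move: km; rewrite sm -{1}mE rank_mX // => /leq_trans; apply; apply: subset_leq_card; apply/subsetP => x; rewrite inE => /andP [].
case=> X /andP [cX kX]; apply/Pw_char; exists (mX X); split.
- by rewrite size_mX size_word.
- rewrite size_mX rank_mX //; apply: leq_trans kX _; apply: subset_leq_card.
  by apply/subsetP => x xX; rewrite inE xX ltn_ord.
- by rewrite ranked_center.
Qed.

Lemma Qw_runstat a k : k <= n -> Qw k (word a) = (k <= runstat a).
Proof.
move=> kn.
have cE : Qw k (word a) = [forall j : 'I_n, (j < k) ==> [exists i, a i == j]].
  apply/QwP/forallP => H.
    move=> j; apply/implyP => jk; have := H j jk; case/mapP => i _ ji.
    by apply/existsP; exists i; apply/eqP/val_inj.
  move=> v vk; have vn : v < n by lia.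
  have := H (Ordinal vn); rewrite vk /= => /existsP [i /eqP ai].
  apply/mapP; exists i; first by rewrite mem_enum.
  by rewrite ai.
rewrite cE /runstat; apply/idP/idP => H.
  have kN : k < n.+1 by lia.
  exact: (leq_bigmax_cond (Ordinal kN) H).
case: k kn H {cE} => [|k] kn H.
  by apply/forallP => j; rewrite ltn0.
move: H; apply: contraLR => HN; rewrite -ltnNge ltnS; apply/bigmax_leqP => i ci; rewrite leqNgt; apply/negP => ki.
move/negP: HN; apply; apply/forallP => j; apply/implyP => jk.
by move/forallP: ci => /(_ j) /implyP; apply; apply: leq_trans jk _.
Qed.

Definition pfl (w : seq nat) := all (fun i => i < count (cle i) w) (iota 0 n).

Lemma pf_word a : is_pf a = pfl (word a).
Proof.
rewrite /pfl all_iota_ord /is_pf; apply: eq_forallb => i.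
by rewrite /word count_map cnt_card.
Qed.

Lemma resp_pfl : resp pfl.
Proof.
move=> w u H; rewrite /pfl.
have E : (fun i => i < count (cle i) w) =1 (fun i => i < count (cle i) u).
  by move=> i /=; have := H i; lia.
by rewrite (eq_all E).
Qed.

End F.


Section M.
Variable n : nat.
Implicit Types a : {ffun 'I_n -> 'I_n}.

Definition Ge (f : {ffun 'I_n -> 'I_n} -> nat) k := \sum_(a | is_pf a) (k <= f a).
Definition Eq (f : {ffun 'I_n -> 'I_n} -> nat) k := \sum_(a | is_pf a) (f a == k).

Lemma zstat_le a : zstat a <= n.
Proof.
apply/bigmax_leqP => X _; exact: leq_trans (max_card _) (eq_leq (card_ord n)).
Qed.

Lemma runstat_le a : runstat a <= n.
Proof. apply/bigmax_leqP => i _; rewrite -ltnS; exact: ltn_ord. Qed.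

Lemma Ge_split f k : Ge f k = Eq f k + Ge f k.+1.
Proof.
rewrite /Ge /Eq -big_split; apply: eq_bigr => a _ /=.
by rewrite eq_sym; case: (ltngtP k (f a)).
Qed.

Lemma GeEq k : Ge (@zstat n) k = Ge (@runstat n) k.
Proof.
case: (leqP k n) => kn.
  rewrite /Ge !big_mkcond /=.
  transitivity (\sum_(a : {ffun 'I_n -> 'I_n}) (Pw k (word a) * pfl n (word a))).
    by apply: eq_bigr => a _; rewrite pf_word Pw_zstat; case: (pfl n _); case: (k <= _).
  transitivity (\sum_(a : {ffun 'I_n -> 'I_n}) (Qw k (word a) * pfl n (word a))).
    rewrite (@sum_ffun n n (fun w => Pw k w * pfl n w)) (@sum_ffun n n (fun w => Qw k w * pfl n w)).
    apply: core => //; exact: resp_pfl.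
  by rewrite [RHS]big_mkcond; apply: eq_bigr => a _; rewrite pf_word Qw_runstat //; case: (pfl n _); case: (k <= _).
rewrite /Ge !big1 // => a _.
  by have := runstat_le a; case: leqP => //; lia.
by have := zstat_le a; case: leqP => //; lia.
Qed.

Lemma EqEq k : Eq (@zstat n) k = Eq (@runstat n) k.
Proof.
by apply/eqP; rewrite -(eqn_add2r (Ge (@zstat n) k.+1)) {2}GeEq -!Ge_split GeEq.
Qed.

Import GRing.Theory.
Local Open Scope ring_scope.

Lemma poly_sum (f : {ffun 'I_n -> 'I_n} -> nat) : (forall a, (f a <= n)%N) ->
  \sum_(a | is_pf a) ('X ^+ f a : {poly int}) = \sum_(k < n.+1) (Eq f k)%:R * 'X^k.
Proof.
move=> fn.
transitivity (\sum_(a | is_pf a) \sum_(k < n.+1) (((f a == k) : nat)%:R * ('X^k : {poly int}))).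
  apply: eq_bigr => a _.
  have fa : (f a < n.+1)%N by rewrite ltnS.
  rewrite (bigD1 (Ordinal fa)) //= eqxx mul1r big1 ?addr0 // => k kne.
  have -> : (f a == k) = false.
    by apply/eqP => e; move/eqP: kne; apply; apply: val_inj; rewrite /= e.
  by rewrite mul0r.
rewrite exchange_big; apply: eq_bigr => k _.
by rewrite -big_distrl /= /Eq natr_sum.
Qed.

End M.

Unset Implicit Arguments.
Local Open Scope ring_scope.

Theorem theorem3p5 (n : nat) (hn : (0 < n)%N) :
  \sum_(a : {ffun 'I_n -> 'I_n} | is_pf a) ('X ^+ zstat a : {poly int}) =
  \sum_(a : {ffun 'I_n -> 'I_n} | is_pf a) ('X ^+ runstat a : {poly int}).
Proof.
rewrite (poly_sum (@zstat_le n)) (poly_sum (@runstat_le n)).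
by apply: eq_bigr => k _; rewrite EqEq.
Qed.
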